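(* Let $a\in\mathbb{R}$, $\lambda\in[0,1)$, and let $f=h+\overline{g}$, where $h,g$ are analytic in $\mathbb{D}$ with $h(0)=g(0)=0$, $h-g=k_a$ and $g'/h'=\lambda z$ in $\mathbb{D}$. Then for $z\in\mathbb{D}$, $$S_f(z)=\frac{2(1-a^2)}{(1-z^2)^2}+\frac{\lambda^2}{2(1-\lambda z)^2}-\frac{2\lambda(z+a)}{(1-z^2)(1-\lambda z)}+\frac{\lambda^2\bar z\,[-3\lambda z^2+2(1-a\lambda)z+2a+\lambda]}{(1-\lambda^2|z|^2)(1-z^2)(1-\lambda z)}-\frac{3\lambda^4\bar z^2}{2(1-\lambda^2|z|^2)^2},$$ and $$\|S_f\|\le \lambda^4+2\lambda^3(|a|+1)+\lambda^2\left(4|a|+\tfrac{13}{2}\right)+2\lambda(|a|+2)+2|1-a^2|.$$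
   Context: $\mathbb{D}$ is the open unit disk. For $a\neq0$, $k_a(z)=\frac{1}{2a}\left[\left(\frac{1+z}{1-z}\right)^a-1\right]$ (principal branch), and $k_0(z)=\frac12\log\frac{1+z}{1-z}$. For a locally univalent harmonic mapping $f=h+\overline g$ with dilatation $\omega=g'/h'$, the Schwarzian derivative is $$S_f=\frac{h'''}{h'}-\frac32\left(\frac{h''}{h'}\right)^2+\frac{\overline{\omega}}{1-|\omega|^2}\left(\frac{h''}{h'}\omega'-\omega''\right)-\frac32\left(\frac{\omega'\overline{\omega}}{1-|\omega|^2}\right)^2,$$ and the Schwarzian norm is $\|S_f\|=\sup_{z\in\mathbb{D}}|S_f(z)|(1-|z|^2)^2$. *)

(* Defs.v *)
From Stdlib Require Import Reals ClassicalEpsilon.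
From Coquelicot Require Import Coquelicot.
Open Scope R_scope.

Definition inD (z : C) : Prop := Cmod z < 1.

(* Complex derivative (total operator, chosen classically; it is the unique
   l with is_derive f z l when f is complex differentiable at z). *)
Definition Cder (f : C -> C) (z : C) : C :=
  epsilon (inhabits (RtoC 0)) (fun l : C => is_derive (K := C_AbsRing) (V := C_NormedModule) f z l).

(* Principal argument in (-PI, PI] (0 at w = 0). *)
Definition Carg (w : C) : R :=
  let x := fst w in let y := snd w in
  if Rlt_dec 0 x then atan (y / x)
  else if Rlt_dec x 0 then
         (if Rle_dec 0 y then atan (y / x) + PI else atan (y / x) - PI)
  else if Rlt_dec 0 y then PI / 2
  else if Rlt_dec y 0 then - (PI / 2) else 0.

Definition Clog (w : C) : C := (ln (Cmod w), Carg w).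

(* Principal branch of w^a for real a: exp(a Log w), with 0^a := 0. *)
Definition Cpow_real (w : C) (a : R) : C :=
  if Req_EM_T (Cmod w) 0 then RtoC 0
  else (Rpower (Cmod w) a * cos (a * Carg w), Rpower (Cmod w) a * sin (a * Carg w)).

Definition k_fun (a : R) (z : C) : C :=
  if Req_EM_T a 0 then Cmult (RtoC (1/2)) (Clog (Cdiv (Cplus 1 z) (Cminus 1 z)))
  else Cmult (Cinv (RtoC (2 * a)))
             (Cminus (Cpow_real (Cdiv (Cplus 1 z) (Cminus 1 z)) a) 1).

Definition harm_schwarzian (h g : C -> C) (z : C) : C :=
  let h1 := Cder h in
  let h2 := Cder h1 in
  let h3 := Cder h2 in
  let om := fun u => Cdiv (Cder g u) (h1 u) in
  let om1 := Cder om in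
  let om2 := Cder om1 in
  let P := Cdiv (h2 z) (h1 z) in
  let w := om z in
  let den := Cminus 1 (RtoC (Cmod w ^ 2)) in
  Cminus
    (Cplus
      (Cminus (Cdiv (h3 z) (h1 z)) (Cmult (RtoC (3/2)) (Cmult P P)))
      (Cmult (Cdiv (Cconj w) den) (Cminus (Cmult P (om1 z)) (om2 z))))
    (Cmult (RtoC (3/2))
       (Cmult (Cdiv (Cmult (om1 z) (Cconj w)) den) (Cdiv (Cmult (om1 z) (Cconj w)) den))).

Definition schwarzian_norm (h g : C -> C) : Rbar :=
  Lub_Rbar (fun r => exists z, inD z /\
     r = Cmod (harm_schwarzian h g z) * (1 - Cmod z ^ 2) ^ 2).

(* Main.v *)
Require Import Defs.
From Stdlib Require Import Reals Lra Psatz ClassicalEpsilon.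
From Coquelicot Require Import Coquelicot.
Open Scope R_scope.

Notation Cd f z l := (is_derive (K:=C_AbsRing) (V:=C_NormedModule) f z l).
Notation Rfd f z l := (filterdiff (K:=R_AbsRing) (U:=C_R_NormedModule) (V:=C_R_NormedModule) f (locally z) l).

Lemma normR_Cmod (w : C) : @norm R_AbsRing C_R_NormedModule w = Cmod w.
Proof.
  destruct w as [x y].
  change (prod_norm (K:=R_AbsRing) (U:=R_NormedModule) (V:=R_NormedModule) (x,y) = Cmod (x,y)).
  unfold prod_norm, Cmod. simpl fst; simpl snd.
  change (@norm _ R_NormedModule x) with (Rabs x).
  change (@norm _ R_NormedModule y) with (Rabs y).
  rewrite !pow2_abs. reflexivity.
Qed.

Lemma loc_conv (z : C) (P : C -> Prop) :
  @locally C_R_NormedModule z P -> @locally (AbsRing_UniformSpace C_AbsRing) z P.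
Proof.
  intros [e He]. exists e. intros y Hy. apply He.
  change (Cmod (Cminus y z) < e) in Hy.
  split; change (Rabs (fst y - fst z) < e) || change (Rabs (snd y - snd z) < e).
  - eapply Rle_lt_trans; [|exact Hy]. eapply Rle_trans; [|apply (Rmax_Cmod (Cminus y z))]. apply Rmax_l.
  - eapply Rle_lt_trans; [|exact Hy]. eapply Rle_trans; [|apply (Rmax_Cmod (Cminus y z))]. apply Rmax_r.
Qed.

Lemma CR (f : C -> C) z l :
  Rfd f z (fun h => Cmult h l) -> Cd f z l.
Proof.
  intros [_ Hd]. split. apply is_linear_scal_l.
  intros x Hx. apply (is_filter_lim_locally_unique (K:=C_AbsRing) (V:=AbsRing_NormedModule C_AbsRing)) in Hx. subst x.
  intros eps. specialize (Hd z (fun P H => H) eps).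
  apply loc_conv in Hd. eapply filter_imp; [|exact Hd]. intros y Hy. simpl in Hy.
  rewrite !normR_Cmod in Hy. exact Hy.
Qed.

Notation RF u z l := (filterdiff (K:=R_AbsRing) (U:=C_R_NormedModule) (V:=R_NormedModule) u (locally z) l).

Lemma RF_fst z : RF (fun w : C => fst w) z (fun h => fst h).
Proof. apply filterdiff_linear. apply (is_linear_fst (K:=R_AbsRing) (U:=R_NormedModule) (V:=R_NormedModule)). Qed.

Lemma RF_snd z : RF (fun w : C => snd w) z (fun h => snd h).
Proof. apply filterdiff_linear. apply (is_linear_snd (K:=R_AbsRing) (U:=R_NormedModule) (V:=R_NormedModule)). Qed.

Lemma RF_comp (phi : R -> R) u z lu d :
  RF u z lu -> is_derive phi (u z) d -> RF (fun w => phi (u w)) z (fun h => lu h * d).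
Proof.
  intros Hu Hp. 
  pose proof (filterdiff_comp' u phi z lu (fun y => scal y d) Hu Hp) as H.
  exact H.
Qed.

Lemma RF_mult u v z lu lv :
  RF u z lu -> RF v z lv -> RF (fun w => u w * v w) z (fun h => lu h * v z + u z * lv h).
Proof.
  intros Hu Hv.
  pose proof (filterdiff_mult_fct (K:=R_AbsRing) (U:=C_R_NormedModule) u v z lu lv Rmult_comm Hu Hv) as H.
  exact H.
Qed.

Lemma RF_plus u v z lu lv :
  RF u z lu -> RF v z lv -> RF (fun w => u w + v w) z (fun h => lu h + lv h).
Proof.
  intros Hu Hv.
  pose proof (filterdiff_plus_fct (K:=R_AbsRing) (U:=C_R_NormedModule) (V:=R_NormedModule) u v lu lv Hu Hv) as H.
  exact H.
Qed.

Lemma RF_ext_lin u z l1 l2 : RF u z l1 -> (forall h, l1 h = l2 h) -> RF u z l2.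
Proof. intros H E. eapply filterdiff_ext_lin; eauto. Qed.

Lemma RF_ext_loc u v z l : @locally C_R_NormedModule z (fun w => u w = v w) -> RF u z l -> RF v z l.
Proof. intros H1 H2. eapply filterdiff_ext_locally; eauto. Qed.

Lemma Rfd_pair (u v : C -> R) z lu lv :
  RF u z lu -> RF v z lv -> Rfd (fun w => (u w, v w)) z (fun h => (lu h, lv h)).
Proof.
  intros Hu Hv.
  apply (filterdiff_comp'_2 (K:=R_AbsRing) (T:=C_R_NormedModule) (U:=R_NormedModule) (V:=R_NormedModule) (W:=C_R_NormedModule) u v (fun a b => (a,b)) z lu lv (fun a b => (a,b)) Hu Hv).
  apply filterdiff_linear.
  pose proof (is_linear_id (K:=R_AbsRing) (V:=C_R_NormedModule)) as [H1 H2 H3].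
  split.
  - intros [x1 x2] [y1 y2]. reflexivity.
  - intros k [x1 x2]. reflexivity.
  - exists 1. split; [lra|]. intros [x1 x2]. simpl fst; simpl snd. rewrite Rmult_1_l. apply Rle_refl.
Qed.

Lemma CR2 (u v : C -> R) z ux uy vx vy :
  RF u z (fun h => fst h * ux + snd h * uy) ->
  RF v z (fun h => fst h * vx + snd h * vy) ->
  uy = - vx -> vy = ux -> Cd (fun w => (u w, v w)) z (ux, vx).
Proof.
  intros Hu Hv E1 E2. apply CR.
  eapply filterdiff_ext_lin. apply (Rfd_pair u v z _ _ Hu Hv).
  intros [h1 h2]. simpl. unfold Cmult. simpl. f_equal; subst; ring.
Qed.

Definition Cexp' (w : C) : C := (exp (fst w) * cos (snd w), exp (fst w) * sin (snd w)).

Lemma Cexp'_deriv z : Cd Cexp' z (Cexp' z).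
Proof.
  unfold Cexp' at 2.
  apply (CR2 (fun w => exp (fst w) * cos (snd w)) (fun w => exp (fst w) * sin (snd w)) z
           _ (- (exp (fst z) * sin (snd z))) _ (exp (fst z) * cos (snd z))).
  - eapply RF_ext_lin. apply RF_mult. apply RF_comp. apply RF_fst. apply is_derive_exp.
    apply RF_comp. apply RF_snd. apply is_derive_cos.
    intros h; simpl; ring.
  - eapply RF_ext_lin. apply RF_mult. apply RF_comp. apply RF_fst. apply is_derive_exp.
    apply RF_comp. apply RF_snd. apply is_derive_sin.
    intros h; simpl; ring.
  - reflexivity.
  - reflexivity.
Qed.

Definition Clog' (w : C) : C := (ln (Cmod w), atan (snd w / fst w)).

Lemma deriv_lnsqrt t : 0 < t -> is_derive (fun s => ln (sqrt s)) t (/ (2 * t)).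
Proof.
  intros Ht.
  assert (Hs : 0 < sqrt t) by (apply sqrt_lt_R0; auto).
  eapply is_derive_ext. intros s. reflexivity.
  pose proof (is_derive_sqrt (fun s => s) t 1 (is_derive_id t) Ht) as H1.
  pose proof (is_derive_comp ln (fun s => sqrt s) t _ _ (is_derive_ln _ Hs) H1) as H2.
  replace (/ (2 * t)) with (scal (1 / (2 * sqrt t)) (/ sqrt t)). exact H2.
  unfold scal; simpl; unfold mult; simpl.
  rewrite <- (sqrt_sqrt t) at 3 by lra. field. lra.
Qed.

Lemma deriv_sq t : is_derive (fun s => s ^ 2) t (2 * t).
Proof. auto_derive; auto. ring. Qed.

Lemma deriv_inv t : t <> 0 -> is_derive (fun s => / s) t (- / t ^ 2).
Proof. intros H. auto_derive; auto. field. auto. Qed.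

Lemma Clog'_deriv z : 0 < fst z -> Cd Clog' z (Cinv z).
Proof.
  intros Hx. destruct z as [x y]. simpl in Hx.
  assert (Hq : 0 < x ^ 2 + y ^ 2) by nra.
  unfold Cinv; simpl fst; simpl snd.
  apply (CR2 (fun w => ln (Cmod w)) (fun w => atan (snd w / fst w)) (x,y)
           _ (y / (x^2+y^2)) _ (x / (x^2+y^2))).
  - eapply RF_ext_lin. unfold Cmod.
    apply (RF_comp (fun s => ln (sqrt s))). apply RF_plus.
    apply (RF_comp (fun s => s ^ 2)). apply RF_fst. apply deriv_sq.
    apply (RF_comp (fun s => s ^ 2)). apply RF_snd. apply deriv_sq.
    apply deriv_lnsqrt. simpl. exact Hq.
    intros h; simpl. field. lra.
  - eapply RF_ext_lin.
    apply (RF_comp atan). apply RF_mult. apply RF_snd.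
    apply (RF_comp (fun s => / s)). apply RF_fst. apply deriv_inv. simpl; lra.
    apply is_derive_atan.
    intros h; simpl. unfold Rsqr. field. split; [|lra]. 
    nra.
  - field. lra.
  - reflexivity.
Qed.

Notation CdA f z l := (is_derive (K:=C_AbsRing) (V:=AbsRing_NormedModule C_AbsRing) f z l).

Lemma Cd_AR f z l : Cd f z l -> CdA f z l.
Proof. intros [Hl Hd]. split. apply is_linear_scal_l. intros x Hx eps. exact (Hd x Hx eps). Qed.

Lemma AR_Cd f z l : CdA f z l -> Cd f z l.
Proof. intros [Hl Hd]. split. apply is_linear_scal_l. intros x Hx eps. exact (Hd x Hx eps). Qed.

Lemma Cd_mult f g z df dg : Cd f z df -> Cd g z dg ->
  Cd (fun w => Cmult (f w) (g w)) z (Cplus (Cmult df (g z)) (Cmult (f z) dg)).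
Proof.
  intros Hf Hg.
  apply AR_Cd. exact (is_derive_mult (K:=C_AbsRing) f g z df dg (Cd_AR _ _ _ Hf) (Cd_AR _ _ _ Hg) Cmult_comm).
Qed.

Lemma Cd_plus f g z df dg : Cd f z df -> Cd g z dg ->
  Cd (fun w => Cplus (f w) (g w)) z (Cplus df dg).
Proof. intros Hf Hg. exact (is_derive_plus f g z df dg Hf Hg). Qed.

Lemma Cd_opp f z df : Cd f z df -> Cd (fun w => Copp (f w)) z (Copp df).
Proof. intros Hf. exact (is_derive_opp f z df Hf). Qed.

Lemma Cd_minus f g z df dg : Cd f z df -> Cd g z dg ->
  Cd (fun w => Cminus (f w) (g w)) z (Cminus df dg).
Proof. intros Hf Hg. exact (is_derive_minus f g z df dg Hf Hg). Qed.

Lemma Cd_const (c : C) z : Cd (fun _ => c) z (RtoC 0).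
Proof. exact (is_derive_const (K:=C_AbsRing) (V:=C_NormedModule) c z). Qed.

Lemma Cd_id z : Cd (fun w => w) z (RtoC 1).
Proof. apply AR_Cd. exact (is_derive_id (K:=C_AbsRing) z). Qed.

Lemma Cd_comp f g z df dg : Cd g z dg -> Cd f (g z) df -> Cd (fun w => f (g w)) z (Cmult dg df).
Proof. intros Hg Hf. exact (is_derive_comp f g z df dg Hf (Cd_AR _ _ _ Hg)). Qed.

Lemma Cd_val f z l l' : Cd f z l -> l = l' -> Cd f z l'.
Proof. intros H E; subst; auto. Qed.

Lemma Cinv_deriv z : z <> RtoC 0 -> Cd Cinv z (Copp (Cinv (Cmult z z))).
Proof.
  intros Hz. destruct z as [x y].
  assert (Hq : 0 < x ^ 2 + y ^ 2).
  { destruct (Req_dec x 0); destruct (Req_dec y 0); try nra. subst. exfalso; apply Hz; reflexivity. }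
  eapply Cd_val.
  apply (CR2 (fun w => fst w * / (fst w ^ 2 + snd w ^ 2)) (fun w => - snd w * / (fst w ^ 2 + snd w ^ 2)) (x,y)
           ((y^2 - x^2) / (x^2+y^2)^2) (- 2 * x * y / (x^2+y^2)^2) (2 * x * y / (x^2+y^2)^2) ((y^2 - x^2) / (x^2+y^2)^2)).
  - eapply RF_ext_lin.
    apply RF_mult. apply RF_fst.
    apply (RF_comp (fun s => / s)). apply RF_plus.
    apply (RF_comp (fun s => s ^ 2)). apply RF_fst. apply deriv_sq.
    apply (RF_comp (fun s => s ^ 2)). apply RF_snd. apply deriv_sq.
    apply deriv_inv. simpl; lra.
    intros h; simpl. field. lra.
  - eapply RF_ext_lin.
    apply RF_mult. apply (RF_comp (fun s => - s)). apply RF_snd. apply (is_derive_opp (fun s => s) _ 1 (is_derive_id _)).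
    apply (RF_comp (fun s => / s)). apply RF_plus.
    apply (RF_comp (fun s => s ^ 2)). apply RF_fst. apply deriv_sq.
    apply (RF_comp (fun s => s ^ 2)). apply RF_snd. apply deriv_sq.
    apply deriv_inv. simpl; lra.
    intros h; simpl. unfold opp; simpl. field. lra.
  - field. lra.
  - field. lra.
  - unfold Cinv, Copp, Cmult; simpl. f_equal; field; nra.
Qed.

Lemma Cd_inv f z d : Cd f z d -> f z <> RtoC 0 ->
  Cd (fun w => Cinv (f w)) z (Cmult d (Copp (Cinv (Cmult (f z) (f z))))).
Proof. intros Hf Hz. apply (Cd_comp Cinv f z); auto. apply Cinv_deriv; auto. Qed.

Lemma Cder_eq f z l : Cd f z l -> Cder f z = l.
Proof.
  intros H. unfold Cder.
  assert (Hex : exists l0, Cd f z l0) by (exists l; exact H).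
  pose proof (epsilon_spec (inhabits (RtoC 0)) (fun l0 : C => Cd f z l0) Hex) as H2.
  simpl in H2.
  rewrite <- (is_C_derive_unique f z l H).
  symmetry; apply (is_C_derive_unique f z _ H2).
Qed.

Lemma Cder_spec f z : ex_derive (K:=C_AbsRing) (V:=C_NormedModule) f z -> Cd f z (Cder f z).
Proof.
  intros [l H]. rewrite (Cder_eq f z l H). exact H.
Qed.

Lemma D_open z : inD z -> @locally (AbsRing_UniformSpace C_AbsRing) z inD.
Proof.
  intros Hz. unfold inD in *.
  assert (e : 0 < 1 - Cmod z) by lra.
  exists (mkposreal _ e). intros y Hy.
  change (Cmod (Cminus y z) < 1 - Cmod z) in Hy.
  replace y with (Cplus z (Cminus y z)) by ring.
  pose proof (Cmod_triangle z (Cminus y z)). simpl in Hy. lra.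
Qed.

Lemma Cd_loc f g z l : inD z -> (forall w, inD w -> f w = g w) -> Cd f z l -> Cd g z l.
Proof.
  intros Hz E H. apply (is_derive_ext_loc f g z l); auto.
  eapply filter_imp; [|apply (D_open z Hz)]. exact E.
Qed.

Lemma inD_sq z : inD z -> fst z ^ 2 + snd z ^ 2 < 1.
Proof.
  unfold inD, Cmod. intros H.
  destruct (Rlt_or_le (fst z ^ 2 + snd z ^ 2) 1) as [H1|H1]; auto.
  exfalso. apply sqrt_le_1_alt in H1. rewrite sqrt_1 in H1. lra.
Qed.

Definition mob (z : C) : C := Cdiv (Cplus 1 z) (Cminus 1 z).

Lemma one_minus_nz z : inD z -> Cminus 1 z <> RtoC 0.
Proof.
  intros H E. apply inD_sq in H. destruct z as [x y]. injection E. simpl in *. intros. nra.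
Qed.

Lemma one_plus_nz z : inD z -> Cplus 1 z <> RtoC 0.
Proof.
  intros H E. apply inD_sq in H. destruct z as [x y]. injection E. simpl in *. intros. nra.
Qed.

Lemma mob_re z : inD z -> 0 < fst (mob z).
Proof.
  intros H. apply inD_sq in H. destruct z as [x y]. simpl in H.
  unfold mob, Cdiv, Cmult, Cinv, Cplus, Cminus, Copp; simpl.
  set (d := (1 + - x) * ((1 + - x) * 1) + (0 + - y) * ((0 + - y) * 1)).
  assert (Hd : 0 < d) by (unfold d; nra).
  replace ((1 + x) * ((1 + - x) / d) - (0 + y) * (- (0 + - y) / d)) with ((1 - x*x - y*y) / d)
    by (field; lra).
  apply Rdiv_lt_0_compat; nra.
Qed.

Lemma Q_nz z : inD z -> Cminus 1 (Cmult z z) <> RtoC 0.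
Proof.
  intros H. replace (Cminus 1 (Cmult z z)) with (Cmult (Cminus 1 z) (Cplus 1 z)) by ring.
  apply Cmult_neq_0; [apply one_minus_nz|apply one_plus_nz]; auto.
Qed.

Lemma mob_deriv z : inD z -> Cd mob z (Cdiv 2 (Cmult (Cminus 1 z) (Cminus 1 z))).
Proof.
  intros Hz. pose proof (one_minus_nz z Hz). pose proof (one_plus_nz z Hz).
  unfold mob, Cdiv at 1. eapply Cd_val.
  apply Cd_mult. apply Cd_plus. apply Cd_const. apply Cd_id.
  apply Cd_inv. apply Cd_minus. apply Cd_const. apply Cd_id. auto.
  cbv beta. match goal with |- ?x = ?y => change (@eq C x y) end. field. auto.
Qed.

Definition Wf (a : R) (z : C) : C := Cexp' (Cmult (RtoC a) (Clog' (mob z))).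

Lemma W_deriv a z : inD z ->
  Cd (Wf a) z (Cmult (Wf a z) (Cdiv (RtoC (2*a)) (Cminus 1 (Cmult z z)))).
Proof.
  intros Hz. pose proof (one_minus_nz z Hz). pose proof (one_plus_nz z Hz).
  unfold Wf at 1. eapply Cd_val.
  apply (Cd_comp Cexp' (fun w => Cmult (RtoC a) (Clog' (mob w)))).
  apply Cd_mult. apply Cd_const. apply (Cd_comp Clog' mob). apply mob_deriv; auto.
  apply Clog'_deriv, mob_re; auto.
  apply Cexp'_deriv.
  cbv beta. match goal with |- ?x = ?y => change (@eq C x y) end. fold (Wf a z). unfold mob. rewrite RtoC_mult. field. cbv beta. split; [apply Q_nz; auto|split; auto].
Qed.

Lemma Carg_pos w : 0 < fst w -> Carg w = atan (snd w / fst w).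
Proof. intros H. unfold Carg. destruct (Rlt_dec 0 (fst w)); [reflexivity|contradiction]. Qed.

Lemma Clog_pos w : 0 < fst w -> Clog w = Clog' w.
Proof. intros H. unfold Clog, Clog'. rewrite Carg_pos; auto. Qed.

Lemma Cpow_pos w a : 0 < fst w -> Cpow_real w a = Cexp' (Cmult (RtoC a) (Clog' w)).
Proof.
  intros H. unfold Cpow_real.
  destruct (Req_EM_T (Cmod w) 0) as [E|E].
  - exfalso. pose proof (Rmax_Cmod w) as H0. rewrite E in H0.
    pose proof (Rmax_l (Rabs (fst w)) (Rabs (snd w))) as H1. pose proof (Rle_abs (fst w)). lra.
  - unfold Cexp', Clog', Cmult, RtoC. simpl. rewrite <- (Carg_pos w H). unfold Rpower.
    replace (a * ln (Cmod w) - 0 * Carg w) with (a * ln (Cmod w)) by ring.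
    replace (a * Carg w + 0 * ln (Cmod w)) with (a * Carg w) by ring.
    reflexivity.
Qed.

Lemma k_deriv a z : inD z -> Cd (k_fun a) z (Cmult (Wf a z) (Cinv (Cminus 1 (Cmult z z)))).
Proof.
  intros Hz. pose proof (one_minus_nz z Hz). pose proof (one_plus_nz z Hz).
  pose proof (Q_nz z Hz).
  destruct (Req_EM_T a 0) as [Ha|Ha].
  - subst a.
    apply (Cd_loc (fun w => Cmult (RtoC (1/2)) (Clog' (mob w)))); auto.
    { intros w Hw. unfold k_fun. destruct (Req_EM_T 0 0); [|congruence].
      rewrite Clog_pos; [reflexivity|]. apply mob_re; auto. }
    eapply Cd_val. apply Cd_mult. apply Cd_const. apply (Cd_comp Clog' mob). apply mob_deriv; auto.
    apply Clog'_deriv, mob_re; auto.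
    replace (Wf 0 z) with (RtoC 1).
    2:{ unfold Wf, Cexp', Cmult, RtoC. simpl. rewrite !Rmult_0_l, Rminus_0_r, Rplus_0_r, exp_0, cos_0, sin_0.
        f_equal; ring. }
    cbv beta. match goal with |- ?x = ?y => change (@eq C x y) end. unfold mob.
    rewrite (RtoC_div 1 2) by lra. field. cbv beta. split; auto.
  - apply (Cd_loc (fun w => Cmult (Cinv (RtoC (2 * a))) (Cminus (Wf a w) 1))); auto.
    { intros w Hw. unfold k_fun. destruct (Req_EM_T a 0); [congruence|].
      rewrite Cpow_pos; [reflexivity|]. apply mob_re; auto. }
    eapply Cd_val. apply Cd_mult. apply Cd_const. apply Cd_minus. apply W_deriv; auto. apply Cd_const.
    cbv beta. match goal with |- ?x = ?y => change (@eq C x y) end. rewrite RtoC_mult.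
    field. split; [cbv beta; auto| intros E; apply Ha; injection E; intros; lra].
Qed.

Lemma M_nz lam z : 0 <= lam < 1 -> inD z -> Cminus 1 (Cmult (RtoC lam) z) <> RtoC 0.
Proof.
  intros Hl Hz E. apply inD_sq in Hz. destruct z as [x y]. injection E. simpl in *. intros. nra.
Qed.

Section Fns.
Variables (a lam : R).
Definition Lc := RtoC lam.
Definition Hf (z : C) : C :=
  Cmult (Wf a z) (Cinv (Cmult (Cminus 1 (Cmult z z)) (Cminus 1 (Cmult Lc z)))).
Definition Pf (z : C) : C :=
  Cplus (Cdiv (Cplus (RtoC (2*a)) (Cmult 2 z)) (Cminus 1 (Cmult z z)))
        (Cdiv Lc (Cminus 1 (Cmult Lc z))).
Definition P'f (z : C) : C :=
  Cplus (Cdiv (Cplus (Cplus 2 (Cmult 2 (Cmult z z))) (Cmult (RtoC (4*a)) z))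
              (Cmult (Cminus 1 (Cmult z z)) (Cminus 1 (Cmult z z))))
        (Cdiv (Cmult Lc Lc) (Cmult (Cminus 1 (Cmult Lc z)) (Cminus 1 (Cmult Lc z)))).
Definition H2f (z : C) : C := Cmult (Hf z) (Pf z).
Definition H3f (z : C) : C := Cmult (Hf z) (Cplus (Cmult (Pf z) (Pf z)) (P'f z)).
End Fns.

Lemma Hf_deriv a lam z : 0 <= lam < 1 -> inD z -> Cd (Hf a lam) z (H2f a lam z).
Proof.
  intros Hl Hz. pose proof (one_minus_nz z Hz). pose proof (one_plus_nz z Hz).
  pose proof (Q_nz z Hz). pose proof (M_nz lam z Hl Hz).
  unfold Hf at 1. eapply Cd_val.
  apply Cd_mult. apply W_deriv; auto.
  apply Cd_inv. apply Cd_mult.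
  apply Cd_minus. apply Cd_const. apply Cd_mult; apply Cd_id.
  apply Cd_minus. apply Cd_const. apply Cd_mult. apply Cd_const. apply Cd_id.
  apply Cmult_neq_0; auto.
  cbv beta. match goal with |- ?x = ?y => change (@eq C x y) end.
  unfold H2f, Hf, Pf, Lc. rewrite !RtoC_mult.
  field. cbv beta. split; auto.
Qed.

Lemma Pf_deriv a lam z : 0 <= lam < 1 -> inD z -> Cd (Pf a lam) z (P'f a lam z).
Proof.
  intros Hl Hz. pose proof (one_minus_nz z Hz). pose proof (one_plus_nz z Hz).
  pose proof (Q_nz z Hz). pose proof (M_nz lam z Hl Hz).
  unfold Pf at 1, Cdiv. eapply Cd_val.
  apply Cd_plus; apply Cd_mult.
  apply Cd_plus. apply Cd_const. apply Cd_mult. apply Cd_const. apply Cd_id.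
  apply Cd_inv. apply Cd_minus. apply Cd_const. apply Cd_mult; apply Cd_id. auto.
  apply Cd_const.
  apply Cd_inv. apply Cd_minus. apply Cd_const. apply Cd_mult. apply Cd_const. apply Cd_id. auto.
  cbv beta. match goal with |- ?x = ?y => change (@eq C x y) end.
  unfold P'f, Lc. rewrite !RtoC_mult.
  field. cbv beta. split; auto.
Qed.

Lemma H2f_deriv a lam z : 0 <= lam < 1 -> inD z -> Cd (H2f a lam) z (H3f a lam z).
Proof.
  intros Hl Hz. unfold H2f at 1. eapply Cd_val.
  apply Cd_mult. apply Hf_deriv; auto. apply Pf_deriv; auto.
  unfold H3f, H2f. match goal with |- ?x = ?y => change (@eq C x y) end. ring.
Qed.

Lemma Cexp'_nz w : Cexp' w <> RtoC 0.
Proof.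
  unfold Cexp'. intros E. injection E. intros E2 E1.
  pose proof (exp_pos (fst w)). pose proof (sin2_cos2 (snd w)). unfold Rsqr in *.
  apply Rmult_integral in E1. apply Rmult_integral in E2.
  destruct E1; destruct E2; try lra; nra.
Qed.

Definition Sform (a lam : R) (z : C) : C :=
     let L := RtoC lam in
     let A := RtoC a in
     let zb := Cconj z in
     let N2 := RtoC (1 - lam ^ 2 * Cmod z ^ 2) in
     let Q := Cminus 1 (Cmult z z) in
     let M := Cminus 1 (Cmult L z) in
       Cplus (Cplus (Cminus (Cplus
         (Cdiv (RtoC (2 * (1 - a ^ 2))) (Cmult Q Q))
         (Cdiv (Cmult L L) (Cmult 2 (Cmult M M))))
         (Cdiv (Cmult (Cmult 2 L) (Cplus z A)) (Cmult Q M)))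
         (Cdiv (Cmult (Cmult (Cmult L L) zb)
                  (Cplus (Cplus (Cplus (Cmult (Cmult (RtoC (-3)) L) (Cmult z z))
                                       (Cmult (RtoC (2 * (1 - a * lam))) z))
                                (Cmult 2 A)) L))
               (Cmult (Cmult N2 Q) M)))
       (Copp (Cdiv (Cmult (RtoC (3 * lam ^ 4)) (Cmult zb zb)) (Cmult 2 (Cmult N2 N2)))).

Lemma Cconj_R x : Cconj (RtoC x) = RtoC x.
Proof. unfold Cconj, RtoC. simpl. f_equal. ring. Qed.

Definition Sexpr (h1 h2 h3 w o1 o2 : C) : C :=
  let P := Cdiv h2 h1 in let den := Cminus 1 (RtoC (Cmod w ^ 2)) in
  Cminus (Cplus (Cminus (Cdiv h3 h1) (Cmult (RtoC (3/2)) (Cmult P P)))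
                (Cmult (Cdiv (Cconj w) den) (Cminus (Cmult P o1) o2)))
         (Cmult (RtoC (3/2)) (Cmult (Cdiv (Cmult o1 (Cconj w)) den) (Cdiv (Cmult o1 (Cconj w)) den))).

Lemma alg_id (a lam : R) (z X : C) : X <> RtoC 0 -> 0 <= lam < 1 -> inD z ->
  Sexpr X (Cmult X (Pf a lam z)) (Cmult X (Cplus (Cmult (Pf a lam z) (Pf a lam z)) (P'f a lam z)))
    (Cmult (RtoC lam) z) (RtoC lam) (RtoC 0) = Sform a lam z.
Proof.
  intros HX Hl Hz.
  pose proof (one_minus_nz z Hz). pose proof (one_plus_nz z Hz).
  pose proof (Q_nz z Hz). pose proof (M_nz lam z Hl Hz).
  unfold Sexpr, Sform, Pf, P'f, Lc. cbv zeta.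
  rewrite !Cmod2_conj, !Cmult_conj, !Cconj_R.
  rewrite !RtoC_div by lra.
  rewrite ?RtoC_mult, ?RtoC_minus, ?RtoC_mult, ?RtoC_minus.
  rewrite ?Cmod2_conj. rewrite ?RtoC_pow.
  field. cbv beta. split; [|split; [auto|split; auto]].
  rewrite <- Cmod2_conj, <- RtoC_pow, <- RtoC_mult, <- RtoC_minus.
  intros E. injection E. intros E'. unfold inD in Hz. pose proof (Cmod_ge_0 z).
  assert (lam ^ 2 * Cmod z ^ 2 < 1).
  { assert (lam^2 < 1) by nra. assert (Cmod z ^2 < 1) by nra.
    assert (0 <= lam^2) by nra. assert (0 <= Cmod z ^2) by nra. nra. }
  lra.
Qed.

Lemma schw_formula (a lam : R) (h g : C -> C)
  (Hlam : 0 <= lam < 1)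
  (Hh : forall z, inD z -> ex_derive (K := C_AbsRing) (V := C_NormedModule) h z)
  (Hg : forall z, inD z -> ex_derive (K := C_AbsRing) (V := C_NormedModule) g z)
  (Hk : forall z, inD z -> Cminus (h z) (g z) = k_fun a z)
  (Hdil : forall z, inD z -> Cder h z <> RtoC 0 /\
            Cdiv (Cder g z) (Cder h z) = Cmult (RtoC lam) z) :
  forall z, inD z -> harm_schwarzian h g z = Sform a lam z.
Proof.
  assert (E1 : forall z, inD z -> Cder h z = Hf a lam z).
  { intros z Hz.
    pose proof (Cder_spec h z (Hh z Hz)) as Dh.
    pose proof (Cder_spec g z (Hg z Hz)) as Dg.
    destruct (Hdil z Hz) as [Hnz Hd].
    assert (Eg : Cder g z = Cmult (Cmult (RtoC lam) z) (Cder h z)).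
    { rewrite <- Hd. field. auto. }
    pose proof (Cd_minus h g z _ _ Dh Dg) as Dk.
    apply (Cd_loc _ (k_fun a) z _ Hz Hk) in Dk.
    apply Cder_eq in Dk. rewrite (Cder_eq _ _ _ (k_deriv a z Hz)) in Dk.
    rewrite Eg in Dk.
    pose proof (one_minus_nz z Hz). pose proof (one_plus_nz z Hz).
    pose proof (Q_nz z Hz). pose proof (M_nz lam z Hlam Hz).
    unfold Hf, Lc.
    replace (Cder h z) with (Cmult (Cminus (Cder h z) (Cmult (Cmult (RtoC lam) z) (Cder h z))) (Cinv (Cminus 1 (Cmult (RtoC lam) z)))).
    2:{ field. auto. }
    rewrite <- Dk. field. split; auto. }
  assert (E2 : forall z, inD z -> Cder (Cder h) z = H2f a lam z).
  { intros z Hz. apply Cder_eq.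
    apply (Cd_loc (Hf a lam)); auto.
    - intros w Hw. symmetry. apply E1; auto.
    - apply Hf_deriv; auto. }
  assert (E3 : forall z, inD z -> Cder (Cder (Cder h)) z = H3f a lam z).
  { intros z Hz. apply Cder_eq.
    apply (Cd_loc (H2f a lam)); auto.
    - intros w Hw. symmetry. apply E2; auto.
    - apply H2f_deriv; auto. }
  set (om := fun u => Cdiv (Cder g u) (Cder h u)).
  assert (O1 : forall z, inD z -> Cder om z = RtoC lam).
  { intros z Hz. apply Cder_eq.
    apply (Cd_loc (fun w => Cmult (RtoC lam) w)); auto.
    - intros w Hw. symmetry. apply Hdil; auto.
    - eapply Cd_val. apply Cd_mult. apply Cd_const. apply Cd_id.
      cbv beta. match goal with |- ?x = ?y => change (@eq C x y) end. ring. }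
  assert (O2 : forall z, inD z -> Cder (Cder om) z = RtoC 0).
  { intros z Hz. apply Cder_eq.
    apply (Cd_loc (fun w => RtoC lam)); auto.
    - intros w Hw. symmetry. apply O1; auto.
    - apply Cd_const. }
  intros z Hz.
  unfold harm_schwarzian. cbv zeta. fold om.
  rewrite (O2 z Hz), (O1 z Hz), (E3 z Hz), (E2 z Hz).
  unfold om. rewrite (proj2 (Hdil z Hz)). rewrite (E1 z Hz).
  change (Sexpr (Hf a lam z) (H2f a lam z) (H3f a lam z) (Cmult (RtoC lam) z) (RtoC lam) (RtoC 0) = Sform a lam z).
  unfold H2f, H3f. apply alg_id; auto.
  rewrite <- E1; auto. apply Hdil; auto.
Qed.

Lemma real_bound (a lam r u v t s p : R) :
  0 <= lam < 1 -> 0 <= r < 1 -> 0 <= u <= 1 -> 0 <= v <= 1 + lam -> 0 <= t <= 1 ->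
  0 <= s <= 1 + Rabs a -> 0 <= p <= 2 * Rabs a + 2 ->
  Rabs (2 * (1 - a ^ 2)) * (u * u) + lam * lam / 2 * (v * v) + 2 * lam * s * (u * v)
  + lam * lam * r * p * (t * u) + lam * lam * lam * r * (t * v)
  + 3 * lam ^ 4 / 2 * (r * r * (t * t))
  <= lam ^ 4 + 2 * lam ^ 3 * (Rabs a + 1) + lam ^ 2 * (4 * Rabs a + 13 / 2)
             + 2 * lam * (Rabs a + 2) + 2 * Rabs (1 - a ^ 2).
Proof.
  intros Hl Hr Hu Hv Ht Hs Hp.
  pose proof (Rabs_pos a) as Ha. pose proof (Rabs_pos (1 - a^2)) as Ha2.
  rewrite Rabs_mult, (Rabs_pos_eq 2) by lra.
  assert (B1 : u * u <= 1) by nra.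
  assert (B2 : v * v <= (1 + lam) * (1 + lam)) by nra.
  assert (B3 : s * (u * v) <= (1 + Rabs a) * (1 + lam)).
  { apply Rmult_le_compat; try nra. }
  assert (B4 : r * p * (t * u) <= 2 * Rabs a + 2).
  { assert (r * p <= 2 * Rabs a + 2) by nra. assert (t * u <= 1) by nra.
    assert (0 <= r * p) by nra. assert (0 <= t * u) by nra. nra. }
  assert (B5 : r * (t * v) <= 1 + lam).
  { assert (t * v <= 1 + lam) by nra. nra. }
  assert (B6 : r * r * (t * t) <= 1).
  { assert (r * r <= 1) by nra. assert (t * t <= 1) by nra. nra. }
  assert (L2 : 0 <= lam * lam) by nra.
  assert (L3 : 0 <= lam * lam * lam) by nra.
  assert (L4 : 0 <= lam ^ 4) by nra.
  assert (E1 : 2 * Rabs (1 - a ^ 2) * (u * u) <= 2 * Rabs (1 - a ^ 2)) by nra.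
  assert (E2 : lam * lam / 2 * (v * v) <= lam * lam / 2 * ((1 + lam) * (1 + lam))) by
    (apply Rmult_le_compat_l; lra).
  assert (E3 : 2 * lam * s * (u * v) <= 2 * lam * ((1 + Rabs a) * (1 + lam))).
  { rewrite Rmult_assoc. apply Rmult_le_compat_l; lra. }
  assert (E4 : lam * lam * r * p * (t * u) <= lam * lam * (2 * Rabs a + 2)).
  { replace (lam * lam * r * p * (t * u)) with (lam * lam * (r * p * (t * u))) by ring.
    apply Rmult_le_compat_l; lra. }
  assert (E5 : lam * lam * lam * r * (t * v) <= lam * lam * lam * (1 + lam)).
  { replace (lam * lam * lam * r * (t * v)) with (lam * lam * lam * (r * (t * v))) by ring.
    apply Rmult_le_compat_l; lra. }
  assert (E6 : 3 * lam ^ 4 / 2 * (r * r * (t * t)) <= 3 * lam ^ 4 / 2) by nra.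
  assert (lam ^ 4 <= lam ^ 2) by nra.
  assert (0 <= Rabs a * lam ^ 3) by nra.
  nra.
Qed.

Lemma pt_bound a lam z : 0 <= lam < 1 -> inD z ->
  Cmod (Sform a lam z) * (1 - Cmod z ^ 2) ^ 2 <=
  lam ^ 4 + 2 * lam ^ 3 * (Rabs a + 1) + lam ^ 2 * (4 * Rabs a + 13 / 2)
             + 2 * lam * (Rabs a + 2) + 2 * Rabs (1 - a ^ 2).
Proof.
  intros Hl Hz.
  pose proof (one_minus_nz z Hz). pose proof (one_plus_nz z Hz).
  pose proof (Q_nz z Hz) as HQ. pose proof (M_nz lam z Hl Hz) as HM.
  set (r := Cmod z). assert (Hr : 0 <= r < 1) by (split; [apply Cmod_ge_0|exact Hz]).
  set (n := 1 - lam ^ 2 * r ^ 2).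
  assert (Hn : 0 < n).
  { unfold n. assert (lam^2 < 1) by nra. assert (r ^2 < 1) by nra.
    assert (0 <= lam^2) by nra. assert (0 <= r ^2) by nra. nra. }
  assert (HN : RtoC n <> RtoC 0) by (intros E; injection E; lra).
  set (Q := Cminus 1 (Cmult z z)). set (M := Cminus 1 (Cmult (RtoC lam) z)).
  set (T1 := Cdiv (RtoC (2 * (1 - a ^ 2))) (Cmult Q Q)).
  set (T2 := Cdiv (Cmult (RtoC lam) (RtoC lam)) (Cmult 2 (Cmult M M))).
  set (T3 := Cdiv (Cmult (Cmult 2 (RtoC lam)) (Cplus z (RtoC a))) (Cmult Q M)).
  set (T4a := Cdiv (Cmult (Cmult (Cmult (RtoC lam) (RtoC lam)) (Cconj z)) (Cplus (Cmult 2 (RtoC a)) (Cmult 2 z)))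
                  (Cmult (RtoC n) Q)).
  set (T4b := Cdiv (Cmult (Cmult (Cmult (RtoC lam) (RtoC lam)) (RtoC lam)) (Cconj z)) (Cmult (RtoC n) M)).
  set (T5 := Cdiv (Cmult (RtoC (3 * lam ^ 4)) (Cmult (Cconj z) (Cconj z))) (Cmult 2 (Cmult (RtoC n) (RtoC n)))).
  assert (ES : Sform a lam z = Cminus (Cplus (Cplus (Cminus (Cplus T1 T2) T3) T4a) T4b) T5).
  { unfold Sform. cbv zeta. fold r n Q M. unfold T1, T2, T3, T4a, T4b, T5.
    rewrite (RtoC_mult 2 (1 - a * lam)), (RtoC_minus 1 (a * lam)), (RtoC_mult a lam).
    unfold Q, M in *. field. auto. }
  set (q := Cmod Q). set (m := Cmod M).
  assert (Hq : 1 - r ^ 2 <= q).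
  { unfold q, Q. pose proof (Cmod_triangle (Cminus 1 (Cmult z z)) (Cmult z z)) as T.
    replace (Cplus (Cminus 1 (Cmult z z)) (Cmult z z)) with (RtoC 1) in T by ring.
    rewrite Cmod_1, Cmod_mult in T. fold r in T. lra. }
  assert (Hm : 1 - lam * r <= m).
  { unfold m, M. pose proof (Cmod_triangle (Cminus 1 (Cmult (RtoC lam) z)) (Cmult (RtoC lam) z)) as T.
    replace (Cplus (Cminus 1 (Cmult (RtoC lam) z)) (Cmult (RtoC lam) z)) with (RtoC 1) in T by ring.
    rewrite Cmod_1, Cmod_mult, Cmod_R, Rabs_pos_eq in T by lra. fold r in T. lra. }
  assert (Hq0 : 0 < q) by nra.
  assert (Hm0 : 0 < m) by nra.
  set (w := 1 - r ^ 2). assert (Hw : 0 < w) by (unfold w; nra).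
  set (u := w / q). set (v := w / m). set (t := w / n).
  assert (Hu : 0 <= u <= 1).
  { unfold u. split. apply Rlt_le, Rdiv_lt_0_compat; lra.
    apply Rmult_le_reg_r with q; auto. unfold Rdiv. rewrite Rmult_assoc, Rinv_l by (apply Rgt_not_eq; lra). unfold w; lra. }
  assert (Hv : 0 <= v <= 1 + lam).
  { unfold v. split. apply Rlt_le, Rdiv_lt_0_compat; lra.
    apply Rmult_le_reg_r with m; auto. unfold Rdiv. rewrite Rmult_assoc, Rinv_l by (apply Rgt_not_eq; lra).
    assert (w <= (1 + lam) * (1 - lam * r)).
    { unfold w. assert (H4 : (1 + lam) ^ 2 <= 4) by nra.
      assert (H5 : lam * (1 + lam) ^ 2 <= 4).
      { assert (0 <= (1+lam)^2) by nra. nra. }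
      assert (H6 : 0 <= (r - lam * (1 + lam) / 2) ^ 2) by apply pow2_ge_0.
      assert (H7 : 0 <= lam * (4 - lam * (1 + lam) ^ 2)) by (apply Rmult_le_pos; lra).
      nra. }
    nra. }
  assert (Ht : 0 <= t <= 1).
  { unfold t. split. apply Rlt_le, Rdiv_lt_0_compat; lra.
    apply Rmult_le_reg_r with n; auto. unfold Rdiv. rewrite Rmult_assoc, Rinv_l by (apply Rgt_not_eq; lra).
    unfold w, n. assert (0 <= r^2) by apply pow2_ge_0. assert (lam^2 <= 1) by nra. assert (lam^2 * r^2 <= 1 * r^2) by (apply Rmult_le_compat_r; lra). lra. }
  set (sa := Cmod (Cplus z (RtoC a))).
  assert (Hs : 0 <= sa <= 1 + Rabs a).
  { split. apply Cmod_ge_0. unfold sa. eapply Rle_trans. apply Cmod_triangle.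
    rewrite Cmod_R. fold r. lra. }
  set (p := Cmod (Cplus (Cmult 2 (RtoC a)) (Cmult 2 z))).
  assert (Hp : 0 <= p <= 2 * Rabs a + 2).
  { split. apply Cmod_ge_0. unfold p. eapply Rle_trans. apply Cmod_triangle.
    rewrite !Cmod_mult, !Cmod_R, Rabs_pos_eq by lra. fold r. lra. }
  assert (H2 : RtoC 2 <> RtoC 0) by (intros E; injection E; lra).
  assert (Hnq : n <> 0) by (apply Rgt_not_eq; lra).
  assert (Hqq : q <> 0) by (apply Rgt_not_eq; lra).
  assert (Hmm : m <> 0) by (apply Rgt_not_eq; lra).
  assert (C1 : Cmod T1 * w ^ 2 = Rabs (2 * (1 - a ^ 2)) * (u * u)).
  { unfold T1. rewrite Cmod_div by (apply Cmult_neq_0; auto).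
    rewrite Cmod_mult, Cmod_R. fold q. unfold u. field. auto. }
  assert (C2 : Cmod T2 * w ^ 2 = lam * lam / 2 * (v * v)).
  { unfold T2. rewrite Cmod_div by (repeat apply Cmult_neq_0; auto).
    rewrite !Cmod_mult, !Cmod_R. fold m. rewrite !(Rabs_pos_eq lam), (Rabs_pos_eq 2) by lra.
    unfold v. field. auto. }
  assert (C3 : Cmod T3 * w ^ 2 = 2 * lam * sa * (u * v)).
  { unfold T3. rewrite Cmod_div by (repeat apply Cmult_neq_0; auto).
    rewrite !Cmod_mult, !Cmod_R. fold q m sa. rewrite !(Rabs_pos_eq lam), (Rabs_pos_eq 2) by lra.
    unfold u, v. field. auto. }
  assert (C4 : Cmod T4a * w ^ 2 = lam * lam * r * p * (t * u)).
  { unfold T4a. rewrite Cmod_div by (repeat apply Cmult_neq_0; auto).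
    rewrite !Cmod_mult, !Cmod_R, Cmod_conj. fold q r p. rewrite !(Rabs_pos_eq lam), (Rabs_pos_eq n) by lra.
    unfold t, u. field. auto. }
  assert (C5 : Cmod T4b * w ^ 2 = lam * lam * lam * r * (t * v)).
  { unfold T4b. rewrite Cmod_div by (repeat apply Cmult_neq_0; auto).
    rewrite !Cmod_mult, !Cmod_R, Cmod_conj. fold m r. rewrite !(Rabs_pos_eq lam), (Rabs_pos_eq n) by lra.
    unfold t, v. field. auto. }
  assert (C6 : Cmod T5 * w ^ 2 = 3 * lam ^ 4 / 2 * (r * r * (t * t))).
  { unfold T5. rewrite Cmod_div by (repeat apply Cmult_neq_0; auto).
    rewrite !Cmod_mult, !Cmod_R, Cmod_conj. fold r. rewrite (Rabs_pos_eq n), (Rabs_pos_eq 2) by lra.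
    rewrite (Rabs_pos_eq (3 * lam ^ 4)) by (assert (0 <= lam ^ 4) by (apply pow_le; lra); lra).
    unfold t. field. auto. }
  assert (Tri : Cmod (Cminus (Cplus (Cplus (Cminus (Cplus T1 T2) T3) T4a) T4b) T5) <=
     Cmod T1 + Cmod T2 + Cmod T3 + Cmod T4a + Cmod T4b + Cmod T5).
  { unfold Cminus.
    pose proof (Cmod_triangle T1 T2) as K1.
    pose proof (Cmod_triangle (Cplus T1 T2) (Copp T3)) as K2.
    pose proof (Cmod_triangle (Cplus (Cplus T1 T2) (Copp T3)) T4a) as K3.
    pose proof (Cmod_triangle (Cplus (Cplus (Cplus T1 T2) (Copp T3)) T4a) T4b) as K4.
    pose proof (Cmod_triangle (Cplus (Cplus (Cplus (Cplus T1 T2) (Copp T3)) T4a) T4b) (Copp T5)) as K5.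
    rewrite Cmod_opp in K2, K5. lra. }
  rewrite ES. fold w.
  assert (Hw2 : 0 <= w ^ 2) by apply pow2_ge_0.
  eapply Rle_trans. apply Rmult_le_compat_r. exact Hw2. exact Tri.
  rewrite !Rmult_plus_distr_r, C1, C2, C3, C4, C5, C6.
  apply real_bound; auto.
Qed.
Theorem theorem2p3 (a lam : R) (h g : C -> C)
  (Hlam : 0 <= lam < 1)
  (Hh : forall z, inD z -> ex_derive (K := C_AbsRing) (V := C_NormedModule) h z)
  (Hg : forall z, inD z -> ex_derive (K := C_AbsRing) (V := C_NormedModule) g z)
  (Hh0 : h (RtoC 0) = RtoC 0) (Hg0 : g (RtoC 0) = RtoC 0)
  (Hk : forall z, inD z -> Cminus (h z) (g z) = k_fun a z)
  (Hdil : forall z, inD z -> Cder h z <> RtoC 0 /\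
            Cdiv (Cder g z) (Cder h z) = Cmult (RtoC lam) z) :
  (forall z, inD z ->
     let L := RtoC lam in
     let A := RtoC a in
     let zb := Cconj z in
     let N2 := RtoC (1 - lam ^ 2 * Cmod z ^ 2) in
     let Q := Cminus 1 (Cmult z z) in
     let M := Cminus 1 (Cmult L z) in
     harm_schwarzian h g z =
       Cplus (Cplus (Cminus (Cplus
         (Cdiv (RtoC (2 * (1 - a ^ 2))) (Cmult Q Q))
         (Cdiv (Cmult L L) (Cmult 2 (Cmult M M))))
         (Cdiv (Cmult (Cmult 2 L) (Cplus z A)) (Cmult Q M)))
         (Cdiv (Cmult (Cmult (Cmult L L) zb)
                  (Cplus (Cplus (Cplus (Cmult (Cmult (RtoC (-3)) L) (Cmult z z))
                                       (Cmult (RtoC (2 * (1 - a * lam))) z))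
                                (Cmult 2 A)) L))
               (Cmult (Cmult N2 Q) M)))
       (Copp (Cdiv (Cmult (RtoC (3 * lam ^ 4)) (Cmult zb zb)) (Cmult 2 (Cmult N2 N2)))))
  /\
  Rbar_le (schwarzian_norm h g)
    (Finite (lam ^ 4 + 2 * lam ^ 3 * (Rabs a + 1) + lam ^ 2 * (4 * Rabs a + 13 / 2)
             + 2 * lam * (Rabs a + 2) + 2 * Rabs (1 - a ^ 2))).
Proof.
  split.
  - intros z Hz. exact (schw_formula a lam h g Hlam Hh Hg Hk Hdil z Hz).
  - unfold schwarzian_norm.
    match goal with |- Rbar_le (Lub_Rbar ?E) _ => destruct (Lub_Rbar_correct E) as [_ Hlub] end.
    apply Hlub. intros x [z [Hz Ex]]. subst x. simpl.
    rewrite (schw_formula a lam h g Hlam Hh Hg Hk Hdil z Hz).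
    apply pt_bound; auto.
Qed.
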